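(* Let $\mathcal{L}_2\subset\mathbb{P}^2_{\mathbb{R}}$ be the arrangement of $12$ lines defined by \begin{multline*} Q_2=xy(x-y)(x+y-z)(x-z)(y-z)\big(x+(1-\sqrt2)z\big)\big(y+(\sqrt2-2)z\big)\big(x+\sqrt2y+(1-\sqrt2)z\big)\\ \Big(x-\sqrt2z+\tfrac{\sqrt2}{2}y\Big)\big(x+(\sqrt2+1)y-\sqrt2z\big)\big(x+(\sqrt2-1)y+(2-2\sqrt2)z\big). \end{multline*} Then the real realization space of the matroid of $\mathcal{L}_2$ is zero-dimensional.
   Context: The matroid of a line arrangement $\{H_1,\dots,H_n\}\subset\mathbb{P}^2_{\mathbb{F}}$ is the rank-$3$ matroid on $[n]$ whose bases are the $3$-subsets $\{i,j,k\}$ with $H_i\cap H_j\cap H_k=\emptyset$ (equivalently, it encodes the intersection lattice). For a matroid $M$ realizable over $\mathbb{F}$, its realization space $\mathcal{R}(M;\mathbb{F})$ is the set of all arrangements of $n$ distinct lines in $\mathbb{P}^2_{\mathbb{F}}$ (with lines labeled by $[n]$) realizing $M$, modulo the action of $\mathrm{PGL}(3;\mathbb{F})$; its dimension is meant here. *)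

(* Defs.v *)
From HB Require Import structures.
From mathcomp Require Import all_boot all_order all_algebra.
From mathcomp Require Import reals.
Set Implicit Arguments. Unset Strict Implicit. Unset Printing Implicit Defensive.
Import Order.TTheory GRing.Theory Num.Theory.
Local Open Scope ring_scope.

(* A line  a x + b y + c z = 0  in P^2_R is represented by its coefficient
   row vector (a, b, c) (nonzero, determined up to a nonzero scalar). *)
Definition vec3 {R : pzRingType} (a b c : R) : 'rV[R]_3 :=
  \row_(j < 3) nth 0 [:: a; b; c] j.

Definition det3 {R : comPzRingType} (u v w : 'rV[R]_3) : R :=
  \det (\matrix_(i < 3, j < 3) (nth u [:: u; v; w] i) 0 j).

Definition is_arrangement {R : fieldType} (n : nat) (f : 'I_n -> 'rV[R]_3) : Prop :=
  forall i j : 'I_n, i != j -> \rank (col_mx (f i) (f j)) = 2%N.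

(* the rank-3 matroid of an arrangement, given by its set of bases:
   3-subsets {i,j,k} with H_i ∩ H_j ∩ H_k = ∅, i.e. det of coefficients <> 0 *)
Definition matroid_bases {R : fieldType} (n : nat) (f : 'I_n -> 'rV[R]_3)
  : {set {set 'I_n}} :=
  [set B : {set 'I_n} | (#|B| == 3)%N &&
     [exists i, exists j, exists k,
        (B == [set i; j; k]) && (det3 (f i) (f j) (f k) != 0)]].

Definition realizes {R : fieldType} (n : nat) (M : {set {set 'I_n}})
  (f : 'I_n -> 'rV[R]_3) : Prop :=
  is_arrangement f /\ matroid_bases f = M.

(* f and g are the same point of the realization space: they differ by a
   projective transformation (PGL(3)) and rescaling of each line equation. *)
Definition pgl_equiv {R : fieldType} (n : nat) (f g : 'I_n -> 'rV[R]_3) : Prop :=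
  exists A : 'M[R]_3, A \in unitmx /\
  exists c : 'I_n -> R, (forall i, c i != 0) /\
    forall i, g i = c i *: (f i *m A).

(* The realization space R(M;F) = {realizations}/PGL(3) is zero-dimensional:
   as a semialgebraic set this means it is finite and nonempty, i.e. finitely
   many (and at least one) PGL-orbits of realizations. *)
Definition realization_space_zero_dim {R : fieldType} (n : nat)
  (M : {set {set 'I_n}}) : Prop :=
  exists (m : nat) (F : 'I_m -> 'I_n -> 'rV[R]_3),
    (0 < m)%N /\ (forall t, realizes M (F t)) /\
    (forall g, realizes M g -> exists t, pgl_equiv (F t) g).

Definition L2_list (R : realType) : seq 'rV[R]_3 :=
  let s := Num.sqrt (2 : R) in
  [:: vec3 1 0 0;
      vec3 0 1 0;
      vec3 1 (-1) 0;
      vec3 1 1 (-1);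
      vec3 1 0 (-1);
      vec3 0 1 (-1);
      vec3 1 0 (1 - s);
      vec3 0 1 (s - 2);
      vec3 1 s (1 - s);
      vec3 1 (s / 2) (- s);
      vec3 1 (s + 1) (- s);
      vec3 1 (s - 1) (2 - 2 * s)].

Definition L2 (R : realType) : 'I_12 -> 'rV[R]_3 :=
  fun i => nth 0 (L2_list R) i.

(* Main.v *)
Require Import Defs.
From HB Require Import structures.
From mathcomp Require Import all_boot all_order all_algebra.
From mathcomp Require Import reals ring lra.
From Stdlib Require Import ClassicalEpsilon.
Set Implicit Arguments. Unset Strict Implicit. Unset Printing Implicit Defensive.
Import Order.TTheory GRing.Theory Num.Theory.
Local Open Scope ring_scope.

Section Gen.
Variable R : fieldType.
Implicit Types (u v w x y z a b c d n : 'rV[R]_3).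

Lemma det33 (A : 'M[R]_3) : let G (i j : nat) := A (inord i) (inord j) in \det A =
  G 0%N 0%N * (G 1%N 1%N * G 2%N 2%N - G 1%N 2%N * G 2%N 1%N)
 - G 0%N 1%N * (G 1%N 0%N * G 2%N 2%N - G 1%N 2%N * G 2%N 0%N)
 + G 0%N 2%N * (G 1%N 0%N * G 2%N 1%N - G 1%N 1%N * G 2%N 0%N).
Proof.
move=> G.
have -> : A = \matrix_(i, j) G i j by apply/matrixP=> i j; rewrite mxE /G !inord_val.
rewrite (expand_det_row _ ord0) !big_ord_recl big_ord0 /cofactor.
rewrite !(expand_det_row _ ord0) !big_ord_recl !big_ord0 /cofactor.
rewrite !det_mx11 !mxE /= !expr0 !expr1 /=. ring.
Qed.

Definition e x (k : nat) : R := x 0 (inord k).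

Lemma eV (p q r : R) k : (k < 3)%N -> e (vec3 p q r) k = nth 0 [:: p; q; r] k.
Proof. by move=> hk; rewrite /e /vec3 mxE inordK. Qed.

Lemma eZ (l : R) x k : e (l *: x) k = l * e x k.
Proof. by rewrite /e mxE. Qed.

Lemma row3E x : x = vec3 (e x 0%N) (e x 1%N) (e x 2%N).
Proof.
apply/rowP => j; rewrite /vec3 /e mxE.
case: j => [[|[|[|//]]] Hj] /=; congr (x _ _); apply: val_inj; by rewrite /= inordK.
Qed.

Lemma scale3 (l p q r : R) : l *: vec3 p q r = vec3 (l * p) (l * q) (l * r).
Proof. by apply/rowP => j; rewrite !mxE; case: j => [[|[|[|//]]] Hj]. Qed.

Lemma det3E u v w : det3 u v w =
  e u 0%N * (e v 1%N * e w 2%N - e v 2%N * e w 1%N)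
 - e u 1%N * (e v 0%N * e w 2%N - e v 2%N * e w 0%N)
 + e u 2%N * (e v 0%N * e w 1%N - e v 1%N * e w 0%N).
Proof. by rewrite /det3 det33 !mxE !inordK. Qed.

Lemma det3_vec3 (a1 a2 a3 b1 b2 b3 c1 c2 c3 : R) :
  det3 (vec3 a1 a2 a3) (vec3 b1 b2 b3) (vec3 c1 c2 c3) =
  a1 * (b2 * c3 - b3 * c2) - a2 * (b1 * c3 - b3 * c1) + a3 * (b1 * c2 - b2 * c1).
Proof. by rewrite det3E !eV. Qed.

Lemma det3Z (l1 l2 l3 : R) u v w :
  det3 (l1 *: u) (l2 *: v) (l3 *: w) = l1 * l2 * l3 * det3 u v w.
Proof. rewrite !det3E !eZ -!mulrA; ring. Qed.

Lemma det3_swap12 u v w : det3 v u w = - det3 u v w.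
Proof. rewrite !det3E /= /e; ring. Qed.

Definition cross u v := vec3 (e u 1%N * e v 2%N - e u 2%N * e v 1%N)
   (e u 2%N * e v 0%N - e u 0%N * e v 2%N) (e u 0%N * e v 1%N - e u 1%N * e v 0%N).

Lemma div_help (p q r s : R) : s != 0 -> p * s = q * r -> p = q / s * r.
Proof. by move=> s0 h; rewrite mulrAC -h mulfK. Qed.

Lemma idt2 x a b c d : let n := cross (cross a b) (cross c d) in
  e x 0%N * e n 1%N - e x 1%N * e n 0%N =
    e (cross a b) 2%N * det3 x c d - e (cross c d) 2%N * det3 x a b.
Proof. rewrite /cross !eV // !det3E /= /e; ring. Qed.
Lemma idt1 x a b c d : let n := cross (cross a b) (cross c d) in
  e x 2%N * e n 0%N - e x 0%N * e n 2%N =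
    e (cross a b) 1%N * det3 x c d - e (cross c d) 1%N * det3 x a b.
Proof. rewrite /cross !eV // !det3E /= /e; ring. Qed.
Lemma idt0 x a b c d : let n := cross (cross a b) (cross c d) in
  e x 1%N * e n 2%N - e x 2%N * e n 1%N =
    e (cross a b) 0%N * det3 x c d - e (cross c d) 0%N * det3 x a b.
Proof. rewrite /cross !eV // !det3E /= /e; ring. Qed.

Lemma line_solve x a b c d k : (k < 3)%N -> det3 x a b = 0 -> det3 x c d = 0 ->
  e (cross (cross a b) (cross c d)) k != 0 ->
  x = (e x k / e (cross (cross a b) (cross c d)) k) *: cross (cross a b) (cross c d).
Proof.
move=> hk D1 D2 nk.
have P01 := idt2 x a b c d; have P20 := idt1 x a b c d; have P12 := idt0 x a b c d.
move: P01 P20 P12 nk; set n := cross (cross a b) (cross c d); rewrite D1 D2 !mulr0 subr0.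
move=> /eqP; rewrite subr_eq0 => /eqP P01.
move=> /eqP; rewrite subr_eq0 => /eqP P20.
move=> /eqP; rewrite subr_eq0 => /eqP P12 nk.
rewrite {1}[x]row3E {2}[n]row3E scale3.
case: k hk nk => [|[|[|//]]] _ nk; congr vec3;
  by [rewrite divfK | apply: div_help; rewrite ?P01 ?P20 ?P12].
Qed.

Lemma eE x (i : 'I_3) : x 0 i = e x i.
Proof. by rewrite /e inord_val. Qed.

Lemma sum_div (a0 a1 a2 b0 b1 b2 D c : R) : D != 0 ->
  a0 * b0 + a1 * b1 + a2 * b2 = c * D ->
  a0 * (b0 / D) + a1 * (b1 / D) + a2 * (b2 / D) = c.
Proof. by move=> nz h; rewrite !mulrA -!mulrDl h mulfK. Qed.

Lemma rank2 u v w : det3 u v w != 0 -> \rank (col_mx u v) = 2.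
Proof.
move=> nz; apply/eqP; apply/row_freeP.
exists (\matrix_(i < 3, j < 2) (nth 0 [:: e (cross v w) i; e (cross w u) i] j / det3 u v w)).
rewrite mul_col_mx (scalar_mx_block 1 1) /block_mx; congr col_mx; apply/rowP => j; rewrite !mxE.
all: rewrite !big_ord_recl big_ord0 !mxE addr0 !eE /=.
all: case: splitP => k /= Hk; rewrite Hk ?(ord1 k) !mxE /=.
all: rewrite /bump /= addrA; apply: sum_div => //; rewrite /cross !eV //= det3E /e; ring.
Qed.


Lemma det3_mul u v w (A : 'M[R]_3) :
  det3 (u *m A) (v *m A) (w *m A) = det3 u v w * \det A.
Proof.
rewrite /det3 -det_mulmx; congr (\det _); apply/matrixP => i j; rewrite !mxE.
by case: i => [[|[|[|//]]] ?] /=; rewrite !mxE; apply: eq_bigr => k _; rewrite mxE.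
Qed.

Ltac det_tac u v w H :=
  first [ by transitivity (0 * det3 u v w); [rewrite !det3E /e; ring | rewrite mul0r]
        | by transitivity (det3 u v w); [rewrite !det3E /e; ring | ]
        | by transitivity (- det3 u v w); [rewrite !det3E /e; ring | rewrite H oppr0] ].

Lemma det3_in u v w x y z : x \in [:: u; v; w] -> y \in [:: u; v; w] ->
  z \in [:: u; v; w] -> det3 u v w = 0 -> det3 x y z = 0.
Proof.
rewrite !inE => /or3P[]/eqP-> /or3P[]/eqP-> /or3P[]/eqP-> H; det_tac u v w H.
Qed.

Definition mx3 (f : nat -> nat -> R) : 'M[R]_3 := \matrix_(i, j) f i j.

Lemma mulmx3 x f : x *m mx3 f =
  vec3 (e x 0%N * f 0%N 0%N + e x 1%N * f 1%N 0%N + e x 2%N * f 2%N 0%N)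
       (e x 0%N * f 0%N 1%N + e x 1%N * f 1%N 1%N + e x 2%N * f 2%N 1%N)
       (e x 0%N * f 0%N 2%N + e x 1%N * f 1%N 2%N + e x 2%N * f 2%N 2%N).
Proof.
apply/rowP => j; rewrite !mxE !big_ord_recl big_ord0 !mxE addr0 !eE /= /bump /= addrA.
by case: j => [[|[|[|//]]] Hj].
Qed.

Lemma det_mx3 f : \det (mx3 f) =
  f 0%N 0%N * (f 1%N 1%N * f 2%N 2%N - f 1%N 2%N * f 2%N 1%N)
 - f 0%N 1%N * (f 1%N 0%N * f 2%N 2%N - f 1%N 2%N * f 2%N 0%N)
 + f 0%N 2%N * (f 1%N 0%N * f 2%N 1%N - f 1%N 1%N * f 2%N 0%N).
Proof. by rewrite det33 !mxE !inordK. Qed.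


Lemma sum_divX (a0 a1 a2 b0 b1 b2 D X : R) :
  a0 * b0 + a1 * b1 + a2 * b2 = X ->
  a0 * (b0 / D) + a1 * (b1 / D) + a2 * (b2 / D) = X / D * 1.
Proof. by move=> h; rewrite mulr1 !mulrA -!mulrDl h. Qed.

Lemma sum_div0 (a0 a1 a2 b0 b1 b2 D Y : R) :
  a0 * b0 + a1 * b1 + a2 * b2 = 0 ->
  a0 * (b0 / D) + a1 * (b1 / D) + a2 * (b2 / D) = Y * 0.
Proof. by move=> h; rewrite mulr0 !mulrA -!mulrDl h mul0r. Qed.

Lemma frame u0 u1 u2 u3 : det3 u0 u1 u2 != 0 -> det3 u3 u1 u2 != 0 ->
  det3 u0 u3 u2 != 0 -> det3 u0 u1 u3 != 0 ->
  exists2 A : 'M[R]_3, A \in unitmx & exists k0 k1 k2 : R,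
  [/\ k0 != 0, k1 != 0 & k2 != 0] /\
  [/\ u0 *m A = k0 *: vec3 1 0 0, u1 *m A = k1 *: vec3 0 1 0,
      u2 *m A = k2 *: vec3 0 0 1 & u3 *m A = vec3 1 1 1].
Proof.
move=> nD nD0 nD1 nD2.
pose f (i j : nat) := nth 0 [:: e (cross u1 u2) i / det3 u3 u1 u2;
   e (cross u2 u0) i / det3 u0 u3 u2; e (cross u0 u1) i / det3 u0 u1 u3] j.
exists (mx3 f).
  rewrite unitmxE unitfE det_mx3 /f /=.
  move: nD nD0 nD1 nD2.
  set D := det3 u0 u1 u2; set D0 := det3 u3 u1 u2; set D1 := det3 u0 u3 u2;
  set D2 := det3 u0 u1 u3 => nD nD0 nD1 nD2.
  have -> : e (cross u1 u2) 0%N / D0 * (e (cross u2 u0) 1%N / D1 * (e (cross u0 u1) 2%N / D2) -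
   e (cross u0 u1) 1%N / D2 * (e (cross u2 u0) 2%N / D1)) -
   e (cross u2 u0) 0%N / D1 * (e (cross u1 u2) 1%N / D0 * (e (cross u0 u1) 2%N / D2) -
   e (cross u0 u1) 1%N / D2 * (e (cross u1 u2) 2%N / D0)) +
   e (cross u0 u1) 0%N / D2 * (e (cross u1 u2) 1%N / D0 * (e (cross u2 u0) 2%N / D1) -
   e (cross u2 u0) 1%N / D1 * (e (cross u1 u2) 2%N / D0)) = D ^+ 2 / (D0 * D1 * D2).
    rewrite /D /cross !eV //= det3E /e; field.
    by rewrite nD0 nD1 nD2.
  by rewrite !mulf_neq0 ?invr_neq0 ?expf_neq0 ?mulf_neq0.
exists (det3 u0 u1 u2 / det3 u3 u1 u2), (det3 u0 u1 u2 / det3 u0 u3 u2),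
       (det3 u0 u1 u2 / det3 u0 u1 u3).
split; first by rewrite !mulf_neq0 ?invr_neq0.
split; rewrite mulmx3 ?scale3 /f /=; congr vec3.
all: first [ apply: sum_divX | apply: sum_div0 | apply: sum_div => // ].
all: rewrite /cross !eV //= ?det3E /e; ring.
Qed.

Lemma det3Zr x (la lb : R) a b : det3 x (la *: a) (lb *: b) = la * lb * det3 x a b.
Proof. by rewrite -[x]scale1r det3Z scale1r mul1r. Qed.

Lemma step x (la lb lc ld : R) a b c d N k y z :
  la != 0 -> lb != 0 -> lc != 0 -> ld != 0 -> (k < 3)%N ->
  det3 x (la *: a) (lb *: b) = 0 -> det3 x (lc *: c) (ld *: d) = 0 ->
  cross (cross a b) (cross c d) = N -> e N k != 0 -> det3 x y z != 0 ->
  exists2 l, l != 0 & x = l *: N.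
Proof.
move=> na nb nc nd hk.
rewrite !det3Zr => /eqP; rewrite !mulf_eq0 (negbTE na) (negbTE nb) /= => /eqP D1.
move=> /eqP; rewrite !mulf_eq0 (negbTE nc) (negbTE nd) /= => /eqP D2 EN nk nz.
have := line_solve hk D1 D2; rewrite EN => /(_ nk) Ex.
exists (e x k / e N k) => //.
apply: contraNneq nz => l0; by rewrite Ex l0 -[y]scale1r -[z]scale1r det3Z !mul0r.
Qed.

End Gen.

Section Gen2.
Variable R : fieldType.
Implicit Types (u v w x y z a b c d : 'rV[R]_3).

Lemma bases_nz n (f : 'I_n -> 'rV[R]_3) i j k : i != j -> j != k -> i != k ->
  ([set i; j; k] \in matroid_bases f) = (det3 (f i) (f j) (f k) != 0).
Proof.
move=> ij jk ik; rewrite /matroid_bases inE.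
have -> : #|[set i; j; k]| == 3%N.
  by rewrite setUC cardsU1 cards2 !inE negb_or ij ![k == _]eq_sym ik jk.
rewrite /=; apply/existsP/idP.
- case=> i' /existsP [j' /existsP [k' /andP [/eqP E nz]]].
  apply: contra nz => /eqP Z; apply/eqP; apply: (det3_in _ _ _ Z).
  + have : i' \in [set i; j; k] by rewrite E !inE eqxx ?orbT.
    by rewrite !inE => /orP [/orP [] |] /eqP ->; rewrite eqxx ?orbT.
  + have : j' \in [set i; j; k] by rewrite E !inE eqxx ?orbT.
    by rewrite !inE => /orP [/orP [] |] /eqP ->; rewrite eqxx ?orbT.
  + have : k' \in [set i; j; k] by rewrite E !inE eqxx ?orbT.
    by rewrite !inE => /orP [/orP [] |] /eqP ->; rewrite eqxx ?orbT.
- move=> nz; exists i; apply/existsP; exists j; apply/existsP; exists k.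
  by rewrite eqxx nz.
Qed.

Lemma pgl_sym n (f g : 'I_n -> 'rV[R]_3) : pgl_equiv f g -> pgl_equiv g f.
Proof.
case=> A [uA [c [nc E]]]; exists (invmx A); split; first by rewrite unitmx_inv.
exists (fun i => (c i)^-1); split => [i|i]; first by rewrite invr_neq0.
by rewrite E -scalemxAl scalerA mulVf // scale1r mulmxK.
Qed.

Lemma pgl_trans n (f g h : 'I_n -> 'rV[R]_3) :
  pgl_equiv f g -> pgl_equiv g h -> pgl_equiv f h.
Proof.
case=> A [uA [c [nc E]]] [B [uB [d [nd F]]]].
exists (A *m B); split; first by rewrite unitmx_mul uA uB.
exists (fun i => d i * c i); split => [i|i]; first by rewrite mulf_neq0.
by rewrite F E -scalemxAl scalerA mulmxA.
Qed.

Lemma dz3 (la lb lc : R) a b c : la != 0 -> lb != 0 -> lc != 0 ->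
  det3 (la *: a) (lb *: b) (lc *: c) = 0 -> det3 a b c = 0.
Proof.
move=> na nb nc; rewrite det3Z => /eqP; rewrite !mulf_eq0 (negbTE na) (negbTE nb) (negbTE nc) /=.
by move/eqP.
Qed.

Lemma dnz3 (la lb lc : R) a b c :
  det3 (la *: a) (lb *: b) (lc *: c) != 0 -> det3 a b c != 0.
Proof. by rewrite det3Z; apply: contraNneq => ->; rewrite mulr0. Qed.

End Gen2.

Notation ii n := (@Ordinal 12 n isT).

Section Derive.
Variable R : fieldType.

Definition Nt (t : R) : seq 'rV[R]_3 :=
  [:: vec3 1 0 0; vec3 0 1 0; vec3 (-1) (-1) 0; vec3 0 1 1; vec3 0 0 1; vec3 1 1 1;
      vec3 1 0 (1 - t); vec3 1 t 1;
      vec3 (t^+2 - 2 * t) (t^+2 - t) (- t^+3 + 3 * t^+2 - 2 * t);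
      vec3 (t^+2 - t - 1) (- t^+3 + 3 * t^+2 - 2 * t) (t - 1);
      vec3 (t^+2 - t - 1) (t^+2 - t) (t - 1);
      vec3 (1 + t - t^+2) (2 * t - t^+2) 1].

Lemma all12 (P : 'I_12 -> Prop) : P (ii 0) -> P (ii 1) -> P (ii 2) -> P (ii 3) ->
  P (ii 4) -> P (ii 5) -> P (ii 6) -> P (ii 7) -> P (ii 8) -> P (ii 9) ->
  P (ii 10) -> P (ii 11) -> forall i, P i.
Proof.
move=> p0 p1 p2 p3 p4 p5 p6 p7 p8 p9 p10 p11 [i Hi].
by do 12 (case: i Hi => [|i] Hi; first by rewrite (bool_irrelevance Hi isT)).
Qed.

Lemma derive (g : 'I_12 -> 'rV[R]_3) :
  det3 (g (ii 0)) (g (ii 1)) (g (ii 4)) != 0 ->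
  det3 (g (ii 5)) (g (ii 1)) (g (ii 4)) != 0 ->
  det3 (g (ii 0)) (g (ii 5)) (g (ii 4)) != 0 ->
  det3 (g (ii 0)) (g (ii 1)) (g (ii 5)) != 0 ->
  det3 (g (ii 0)) (g (ii 1)) (g (ii 7)) != 0 ->
  det3 (g (ii 0)) (g (ii 4)) (g (ii 7)) != 0 ->
  det3 (g (ii 0)) (g (ii 5)) (g (ii 7)) != 0 ->
  det3 (g (ii 3)) (g (ii 0)) (g (ii 1)) != 0 ->
  det3 (g (ii 2)) (g (ii 0)) (g (ii 4)) != 0 ->
  det3 (g (ii 6)) (g (ii 0)) (g (ii 1)) != 0 ->
  det3 (g (ii 11)) (g (ii 0)) (g (ii 1)) != 0 ->
  det3 (g (ii 10)) (g (ii 0)) (g (ii 1)) != 0 ->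
  det3 (g (ii 9)) (g (ii 0)) (g (ii 1)) != 0 ->
  det3 (g (ii 8)) (g (ii 0)) (g (ii 1)) != 0 ->
  det3 (g (ii 3)) (g (ii 0)) (g (ii 5)) = 0 ->
  det3 (g (ii 3)) (g (ii 1)) (g (ii 4)) = 0 ->
  det3 (g (ii 2)) (g (ii 0)) (g (ii 1)) = 0 ->
  det3 (g (ii 2)) (g (ii 4)) (g (ii 5)) = 0 ->
  det3 (g (ii 7)) (g (ii 1)) (g (ii 5)) = 0 ->
  det3 (g (ii 6)) (g (ii 0)) (g (ii 4)) = 0 ->
  det3 (g (ii 6)) (g (ii 3)) (g (ii 7)) = 0 ->
  det3 (g (ii 11)) (g (ii 5)) (g (ii 6)) = 0 ->
  det3 (g (ii 11)) (g (ii 2)) (g (ii 7)) = 0 ->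
  det3 (g (ii 10)) (g (ii 0)) (g (ii 7)) = 0 ->
  det3 (g (ii 10)) (g (ii 2)) (g (ii 6)) = 0 ->
  det3 (g (ii 9)) (g (ii 0)) (g (ii 11)) = 0 ->
  det3 (g (ii 9)) (g (ii 1)) (g (ii 10)) = 0 ->
  det3 (g (ii 8)) (g (ii 1)) (g (ii 6)) = 0 ->
  det3 (g (ii 8)) (g (ii 5)) (g (ii 10)) = 0 ->
  det3 (g (ii 9)) (g (ii 4)) (g (ii 7)) = 0 ->
  exists2 A : 'M[R]_3, A \in unitmx & exists t : R, 2 * t^+2 - 4 * t + 1 = 0 /\
    forall i, exists2 l : R, l != 0 & g i *m A = l *: nth 0 (Nt t) i.
Proof.
move=> F1 F2 F3 F4 N017 N047 N057 N301 N204 N601 N1101 N1001 N901 N801.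
move=> Z305 Z314 Z201 Z245 Z715 Z604 Z637 Z1156 Z1127 Z1007 Z1026 Z9011 Z9110 Z816 Z8510 Z947.
have [A uA [k0 [k1 [k4 [[n0 n1 n4] [E0 E1 E4 E5]]]]]] := frame F1 F2 F3 F4.
exists A => //.
have dA : \det A != 0 by rewrite -unitfE -unitmxE.
pose h i := g i *m A.
have tz : forall i j k, det3 (g i) (g j) (g k) = 0 -> det3 (h i) (h j) (h k) = 0.
  by move=> i j k H; rewrite /h det3_mul H mul0r.
have tn : forall i j k, det3 (g i) (g j) (g k) != 0 -> det3 (h i) (h j) (h k) != 0.
  by move=> i j k H; rewrite /h det3_mul mulf_neq0.
move/tz: Z305 => Z305; move/tz: Z314 => Z314; move/tz: Z201 => Z201.
move/tz: Z245 => Z245; move/tz: Z715 => Z715; move/tz: Z604 => Z604.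
move/tz: Z637 => Z637; move/tz: Z1156 => Z1156; move/tz: Z1127 => Z1127.
move/tz: Z1007 => Z1007; move/tz: Z1026 => Z1026; move/tz: Z9011 => Z9011.
move/tz: Z9110 => Z9110; move/tz: Z816 => Z816; move/tz: Z8510 => Z8510.
move/tz: Z947 => Z947.
move/tn: N017 => N017; move/tn: N047 => N047; move/tn: N057 => N057.
move/tn: N301 => N301; move/tn: N204 => N204; move/tn: N601 => N601.
move/tn: N1101 => N1101; move/tn: N1001 => N1001; move/tn: N901 => N901.
move/tn: N801 => N801.
have {}E0 : h (ii 0) = k0 *: vec3 1 0 0 := E0.
have {}E1 : h (ii 1) = k1 *: vec3 0 1 0 := E1.
have {}E4 : h (ii 4) = k4 *: vec3 0 0 1 := E4.
have {}E5 : h (ii 5) = 1 *: vec3 1 1 1 by rewrite scale1r.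
have n5 : (1 : R) != 0 := oner_neq0 _.
rewrite E0 E5 in Z305; rewrite E1 E4 in Z314.
have [l3 n3 E3] : exists2 l : R, l != 0 & h (ii 3) = l *: vec3 0 1 1.
  apply: (step n0 n5 n1 n4 (k := 1%N) isT Z305 Z314 _ _ N301).
    by rewrite /cross !eV //=; congr vec3; ring.
  by rewrite eV //= oner_neq0.
rewrite E0 E1 in Z201; rewrite E4 E5 in Z245.
have [l2 n2 E2] : exists2 l : R, l != 0 & h (ii 2) = l *: vec3 (-1) (-1) 0.
  apply: (step n0 n1 n4 n5 (k := 0%N) isT Z201 Z245 _ _ N204).
    by rewrite /cross !eV //=; congr vec3; ring.
  by rewrite eV //= oppr_eq0 oner_neq0.
have E7r := row3E (h (ii 7)).
set p := e (h (ii 7)) 0%N in E7r; set q := e (h (ii 7)) 1%N in E7r;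
set r := e (h (ii 7)) 2%N in E7r.
rewrite E1 E5 E7r in Z715.
move: Z715; rewrite det3Zr => /eqP; rewrite !mulf_eq0 (negbTE n1) (negbTE n5) /=.
rewrite det3_vec3 => /eqP Z715.
have rp : r = p.
  have : p - r = 0 by rewrite -Z715; ring.
  by move/eqP; rewrite subr_eq0 => /eqP ->.
rewrite E0 E1 -[h (ii 7)]scale1r E7r in N017; move/dnz3: N017.
rewrite det3_vec3 => N017.
have pn : p != 0.
  by apply: contraNneq N017 => p0; rewrite rp p0; apply/eqP; ring.
pose t := q / p.
have E7 : h (ii 7) = p *: vec3 1 t 1.
  by rewrite E7r scale3 mulr1 rp /t mulrC divfK.
rewrite E0 E4 E7 in N047; move/dnz3: N047; rewrite det3_vec3 => N047.
have t0 : t != 0 by apply: contraNneq N047 => ->; apply/eqP; ring.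
rewrite E0 E5 E7 in N057; move/dnz3: N057; rewrite det3_vec3 => N057.
have t1 : t - 1 != 0.
  by apply: contraNneq N057 => /eqP; rewrite subr_eq0 => /eqP ->; apply/eqP; ring.
rewrite E0 E4 in Z604; rewrite E3 E7 in Z637.
have [l6 n6 E6] : exists2 l : R, l != 0 & h (ii 6) = l *: vec3 1 0 (1 - t).
  apply: (step n0 n4 n3 pn (k := 0%N) isT Z604 Z637 _ _ N601).
    by rewrite /cross !eV //=; congr vec3; ring.
  by rewrite eV //= oner_neq0.
rewrite E5 E6 in Z1156; rewrite E2 E7 in Z1127.
have [l11 n11 E11] : exists2 l : R, l != 0 &
    h (ii 11) = l *: vec3 (1 + t - t^+2) (2 * t - t^+2) 1.
  apply: (step n5 n6 n2 pn (k := 2%N) isT Z1156 Z1127 _ _ N1101).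
    by rewrite /cross !eV //=; congr vec3; ring.
  by rewrite eV //= oner_neq0.
rewrite E0 E7 in Z1007; rewrite E2 E6 in Z1026.
have [l10 n10 E10] : exists2 l : R, l != 0 &
    h (ii 10) = l *: vec3 (t^+2 - t - 1) (t^+2 - t) (t - 1).
  apply: (step n0 pn n2 n6 (k := 2%N) isT Z1007 Z1026 _ _ N1001).
    by rewrite /cross !eV //=; congr vec3; ring.
  by rewrite eV.
rewrite E0 E11 in Z9011; rewrite E1 E10 in Z9110.
have [l9 n9 E9] : exists2 l : R, l != 0 &
    h (ii 9) = l *: vec3 (t^+2 - t - 1) (- t^+3 + 3 * t^+2 - 2 * t) (t - 1).
  apply: (step n0 n11 n1 n10 (k := 2%N) isT Z9011 Z9110 _ _ N901).
    by rewrite /cross !eV //=; congr vec3; ring.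
  by rewrite eV.
rewrite E1 E6 in Z816; rewrite E5 E10 in Z8510.
have [l8 n8 E8] : exists2 l : R, l != 0 &
    h (ii 8) = l *: vec3 (t^+2 - 2 * t) (t^+2 - t) (- t^+3 + 3 * t^+2 - 2 * t).
  apply: (step n1 n6 n5 n10 (k := 1%N) isT Z816 Z8510 _ _ N801).
    by rewrite /cross !eV //=; congr vec3; ring.
  rewrite eV //= (_ : t^+2 - t = t * (t - 1)); first by rewrite mulf_neq0.
  ring.
rewrite E9 E4 E7 in Z947; move/(dz3 n9 n4 pn): Z947 => Z947.
have teq : 2 * t^+2 - 4 * t + 1 = 0.
  have : t * (2 * t^+2 - 4 * t + 1) = - det3 (vec3 (t^+2 - t - 1) (- t^+3 + 3 * t^+2 - 2 * t) (t - 1))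
      (vec3 0 0 1) (vec3 1 t 1) by rewrite det3_vec3; ring.
  rewrite Z947 oppr0 => /eqP; rewrite mulf_eq0 (negbTE t0) /=.
  by move/eqP.
exists t; split => //.
apply: all12.
- by exists k0.
- by exists k1.
- by exists l2.
- by exists l3.
- by exists k4.
- by exists 1.
- by exists l6.
- by exists p.
- by exists l8.
- by exists l9.
- by exists l10.
- by exists l11.
Qed.
End Derive.

Section Real.
Variable R : realType.

Lemma s2 : Num.sqrt (2 : R) ^+ 2 = 2.
Proof. by rewrite sqr_sqrtr // ler0n. Qed.

Lemma sb : 141/100 < Num.sqrt (2 : R) < 142/100.
Proof. have := s2; have := sqrtr_ge0 (2 : R) => h1 h2; apply/andP; split; nra. Qed.

Lemma nzpos (x a b : R) : x = a + b * Num.sqrt 2 -> 0 < a + b * Num.sqrt 2 -> x != 0.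
Proof. by move=> -> /lt0r_neq0. Qed.

Lemma nzneg (x a b : R) : x = a + b * Num.sqrt 2 -> a + b * Num.sqrt 2 < 0 -> x != 0.
Proof. by move=> -> /ltr0_neq0. Qed.

Lemma Lz_3_0_5 : det3 (L2 R (ii 3)) (L2 R (ii 0)) (L2 R (ii 5)) = 0.
Proof. by rewrite /L2 /L2_list /= det3_vec3; field: s2. Qed.

Lemma Lz_3_1_4 : det3 (L2 R (ii 3)) (L2 R (ii 1)) (L2 R (ii 4)) = 0.
Proof. by rewrite /L2 /L2_list /= det3_vec3; field: s2. Qed.

Lemma Lz_2_0_1 : det3 (L2 R (ii 2)) (L2 R (ii 0)) (L2 R (ii 1)) = 0.
Proof. by rewrite /L2 /L2_list /= det3_vec3; field: s2. Qed.

Lemma Lz_2_4_5 : det3 (L2 R (ii 2)) (L2 R (ii 4)) (L2 R (ii 5)) = 0.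
Proof. by rewrite /L2 /L2_list /= det3_vec3; field: s2. Qed.

Lemma Lz_7_1_5 : det3 (L2 R (ii 7)) (L2 R (ii 1)) (L2 R (ii 5)) = 0.
Proof. by rewrite /L2 /L2_list /= det3_vec3; field: s2. Qed.

Lemma Lz_6_0_4 : det3 (L2 R (ii 6)) (L2 R (ii 0)) (L2 R (ii 4)) = 0.
Proof. by rewrite /L2 /L2_list /= det3_vec3; field: s2. Qed.

Lemma Lz_6_3_7 : det3 (L2 R (ii 6)) (L2 R (ii 3)) (L2 R (ii 7)) = 0.
Proof. by rewrite /L2 /L2_list /= det3_vec3; field: s2. Qed.

Lemma Lz_11_5_6 : det3 (L2 R (ii 11)) (L2 R (ii 5)) (L2 R (ii 6)) = 0.
Proof. by rewrite /L2 /L2_list /= det3_vec3; field: s2. Qed.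

Lemma Lz_11_2_7 : det3 (L2 R (ii 11)) (L2 R (ii 2)) (L2 R (ii 7)) = 0.
Proof. by rewrite /L2 /L2_list /= det3_vec3; field: s2. Qed.

Lemma Lz_10_0_7 : det3 (L2 R (ii 10)) (L2 R (ii 0)) (L2 R (ii 7)) = 0.
Proof. by rewrite /L2 /L2_list /= det3_vec3; field: s2. Qed.

Lemma Lz_10_2_6 : det3 (L2 R (ii 10)) (L2 R (ii 2)) (L2 R (ii 6)) = 0.
Proof. by rewrite /L2 /L2_list /= det3_vec3; field: s2. Qed.

Lemma Lz_9_0_11 : det3 (L2 R (ii 9)) (L2 R (ii 0)) (L2 R (ii 11)) = 0.
Proof. by rewrite /L2 /L2_list /= det3_vec3; field: s2. Qed.

Lemma Lz_9_1_10 : det3 (L2 R (ii 9)) (L2 R (ii 1)) (L2 R (ii 10)) = 0.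
Proof. by rewrite /L2 /L2_list /= det3_vec3; field: s2. Qed.

Lemma Lz_8_1_6 : det3 (L2 R (ii 8)) (L2 R (ii 1)) (L2 R (ii 6)) = 0.
Proof. by rewrite /L2 /L2_list /= det3_vec3; field: s2. Qed.

Lemma Lz_8_5_10 : det3 (L2 R (ii 8)) (L2 R (ii 5)) (L2 R (ii 10)) = 0.
Proof. by rewrite /L2 /L2_list /= det3_vec3; field: s2. Qed.

Lemma Lz_9_4_7 : det3 (L2 R (ii 9)) (L2 R (ii 4)) (L2 R (ii 7)) = 0.
Proof. by rewrite /L2 /L2_list /= det3_vec3; field: s2. Qed.

Lemma Ln_0_1_3 : det3 (L2 R (ii 0)) (L2 R (ii 1)) (L2 R (ii 3)) != 0.
Proof. apply: (nzneg (a := (-1)) (b := (0))); last by case/andP: sb => ? ?; lra.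
by rewrite /L2 /L2_list /= det3_vec3; field: s2. Qed.

Lemma Ln_0_1_4 : det3 (L2 R (ii 0)) (L2 R (ii 1)) (L2 R (ii 4)) != 0.
Proof. apply: (nzneg (a := (-1)) (b := (0))); last by case/andP: sb => ? ?; lra.
by rewrite /L2 /L2_list /= det3_vec3; field: s2. Qed.

Lemma Ln_0_1_5 : det3 (L2 R (ii 0)) (L2 R (ii 1)) (L2 R (ii 5)) != 0.
Proof. apply: (nzneg (a := (-1)) (b := (0))); last by case/andP: sb => ? ?; lra.
by rewrite /L2 /L2_list /= det3_vec3; field: s2. Qed.

Lemma Ln_0_1_7 : det3 (L2 R (ii 0)) (L2 R (ii 1)) (L2 R (ii 7)) != 0.
Proof. apply: (nzneg (a := (-2)) (b := (1))); last by case/andP: sb => ? ?; lra.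
by rewrite /L2 /L2_list /= det3_vec3; field: s2. Qed.

Lemma Ln_0_2_3 : det3 (L2 R (ii 0)) (L2 R (ii 2)) (L2 R (ii 3)) != 0.
Proof. apply: (nzpos (a := (1)) (b := (0))); last by case/andP: sb => ? ?; lra.
by rewrite /L2 /L2_list /= det3_vec3; field: s2. Qed.

Lemma Ln_0_3_1 : det3 (L2 R (ii 0)) (L2 R (ii 3)) (L2 R (ii 1)) != 0.
Proof. apply: (nzpos (a := (1)) (b := (0))); last by case/andP: sb => ? ?; lra.
by rewrite /L2 /L2_list /= det3_vec3; field: s2. Qed.

Lemma Ln_0_4_1 : det3 (L2 R (ii 0)) (L2 R (ii 4)) (L2 R (ii 1)) != 0.
Proof. apply: (nzpos (a := (1)) (b := (0))); last by case/andP: sb => ? ?; lra.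
by rewrite /L2 /L2_list /= det3_vec3; field: s2. Qed.

Lemma Ln_0_4_7 : det3 (L2 R (ii 0)) (L2 R (ii 4)) (L2 R (ii 7)) != 0.
Proof. apply: (nzpos (a := (1)) (b := (0))); last by case/andP: sb => ? ?; lra.
by rewrite /L2 /L2_list /= det3_vec3; field: s2. Qed.

Lemma Ln_0_5_1 : det3 (L2 R (ii 0)) (L2 R (ii 5)) (L2 R (ii 1)) != 0.
Proof. apply: (nzpos (a := (1)) (b := (0))); last by case/andP: sb => ? ?; lra.
by rewrite /L2 /L2_list /= det3_vec3; field: s2. Qed.

Lemma Ln_0_5_4 : det3 (L2 R (ii 0)) (L2 R (ii 5)) (L2 R (ii 4)) != 0.
Proof. apply: (nzneg (a := (-1)) (b := (0))); last by case/andP: sb => ? ?; lra.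
by rewrite /L2 /L2_list /= det3_vec3; field: s2. Qed.

Lemma Ln_0_5_7 : det3 (L2 R (ii 0)) (L2 R (ii 5)) (L2 R (ii 7)) != 0.
Proof. apply: (nzpos (a := (-1)) (b := (1))); last by case/andP: sb => ? ?; lra.
by rewrite /L2 /L2_list /= det3_vec3; field: s2. Qed.

Lemma Ln_0_6_1 : det3 (L2 R (ii 0)) (L2 R (ii 6)) (L2 R (ii 1)) != 0.
Proof. apply: (nzpos (a := (-1)) (b := (1))); last by case/andP: sb => ? ?; lra.
by rewrite /L2 /L2_list /= det3_vec3; field: s2. Qed.

Lemma Ln_0_7_1 : det3 (L2 R (ii 0)) (L2 R (ii 7)) (L2 R (ii 1)) != 0.
Proof. apply: (nzpos (a := (2)) (b := (-1))); last by case/andP: sb => ? ?; lra.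
by rewrite /L2 /L2_list /= det3_vec3; field: s2. Qed.

Lemma Ln_0_8_1 : det3 (L2 R (ii 0)) (L2 R (ii 8)) (L2 R (ii 1)) != 0.
Proof. apply: (nzpos (a := (-1)) (b := (1))); last by case/andP: sb => ? ?; lra.
by rewrite /L2 /L2_list /= det3_vec3; field: s2. Qed.

Lemma Ln_0_9_1 : det3 (L2 R (ii 0)) (L2 R (ii 9)) (L2 R (ii 1)) != 0.
Proof. apply: (nzpos (a := (0)) (b := (1))); last by case/andP: sb => ? ?; lra.
by rewrite /L2 /L2_list /= det3_vec3; field: s2. Qed.

Lemma Ln_0_10_1 : det3 (L2 R (ii 0)) (L2 R (ii 10)) (L2 R (ii 1)) != 0.
Proof. apply: (nzpos (a := (0)) (b := (1))); last by case/andP: sb => ? ?; lra.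
by rewrite /L2 /L2_list /= det3_vec3; field: s2. Qed.

Lemma Ln_0_11_1 : det3 (L2 R (ii 0)) (L2 R (ii 11)) (L2 R (ii 1)) != 0.
Proof. apply: (nzpos (a := (-2)) (b := (2))); last by case/andP: sb => ? ?; lra.
by rewrite /L2 /L2_list /= det3_vec3; field: s2. Qed.

Lemma Ln_1_2_3 : det3 (L2 R (ii 1)) (L2 R (ii 2)) (L2 R (ii 3)) != 0.
Proof. apply: (nzpos (a := (1)) (b := (0))); last by case/andP: sb => ? ?; lra.
by rewrite /L2 /L2_list /= det3_vec3; field: s2. Qed.

Lemma Ln_1_3_0 : det3 (L2 R (ii 1)) (L2 R (ii 3)) (L2 R (ii 0)) != 0.
Proof. apply: (nzneg (a := (-1)) (b := (0))); last by case/andP: sb => ? ?; lra.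
by rewrite /L2 /L2_list /= det3_vec3; field: s2. Qed.

Lemma Ln_1_4_0 : det3 (L2 R (ii 1)) (L2 R (ii 4)) (L2 R (ii 0)) != 0.
Proof. apply: (nzneg (a := (-1)) (b := (0))); last by case/andP: sb => ? ?; lra.
by rewrite /L2 /L2_list /= det3_vec3; field: s2. Qed.

Lemma Ln_1_5_0 : det3 (L2 R (ii 1)) (L2 R (ii 5)) (L2 R (ii 0)) != 0.
Proof. apply: (nzneg (a := (-1)) (b := (0))); last by case/andP: sb => ? ?; lra.
by rewrite /L2 /L2_list /= det3_vec3; field: s2. Qed.

Lemma Ln_1_6_0 : det3 (L2 R (ii 1)) (L2 R (ii 6)) (L2 R (ii 0)) != 0.
Proof. apply: (nzneg (a := (1)) (b := (-1))); last by case/andP: sb => ? ?; lra.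
by rewrite /L2 /L2_list /= det3_vec3; field: s2. Qed.

Lemma Ln_1_7_0 : det3 (L2 R (ii 1)) (L2 R (ii 7)) (L2 R (ii 0)) != 0.
Proof. apply: (nzneg (a := (-2)) (b := (1))); last by case/andP: sb => ? ?; lra.
by rewrite /L2 /L2_list /= det3_vec3; field: s2. Qed.

Lemma Ln_1_8_0 : det3 (L2 R (ii 1)) (L2 R (ii 8)) (L2 R (ii 0)) != 0.
Proof. apply: (nzneg (a := (1)) (b := (-1))); last by case/andP: sb => ? ?; lra.
by rewrite /L2 /L2_list /= det3_vec3; field: s2. Qed.

Lemma Ln_1_9_0 : det3 (L2 R (ii 1)) (L2 R (ii 9)) (L2 R (ii 0)) != 0.
Proof. apply: (nzneg (a := (0)) (b := (-1))); last by case/andP: sb => ? ?; lra.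
by rewrite /L2 /L2_list /= det3_vec3; field: s2. Qed.

Lemma Ln_1_10_0 : det3 (L2 R (ii 1)) (L2 R (ii 10)) (L2 R (ii 0)) != 0.
Proof. apply: (nzneg (a := (0)) (b := (-1))); last by case/andP: sb => ? ?; lra.
by rewrite /L2 /L2_list /= det3_vec3; field: s2. Qed.

Lemma Ln_1_11_0 : det3 (L2 R (ii 1)) (L2 R (ii 11)) (L2 R (ii 0)) != 0.
Proof. apply: (nzneg (a := (2)) (b := (-2))); last by case/andP: sb => ? ?; lra.
by rewrite /L2 /L2_list /= det3_vec3; field: s2. Qed.

Lemma Ln_2_0_4 : det3 (L2 R (ii 2)) (L2 R (ii 0)) (L2 R (ii 4)) != 0.
Proof. apply: (nzneg (a := (-1)) (b := (0))); last by case/andP: sb => ? ?; lra.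
by rewrite /L2 /L2_list /= det3_vec3; field: s2. Qed.

Lemma Ln_2_3_0 : det3 (L2 R (ii 2)) (L2 R (ii 3)) (L2 R (ii 0)) != 0.
Proof. apply: (nzpos (a := (1)) (b := (0))); last by case/andP: sb => ? ?; lra.
by rewrite /L2 /L2_list /= det3_vec3; field: s2. Qed.

Lemma Ln_2_4_0 : det3 (L2 R (ii 2)) (L2 R (ii 4)) (L2 R (ii 0)) != 0.
Proof. apply: (nzpos (a := (1)) (b := (0))); last by case/andP: sb => ? ?; lra.
by rewrite /L2 /L2_list /= det3_vec3; field: s2. Qed.

Lemma Ln_2_5_0 : det3 (L2 R (ii 2)) (L2 R (ii 5)) (L2 R (ii 0)) != 0.
Proof. apply: (nzpos (a := (1)) (b := (0))); last by case/andP: sb => ? ?; lra.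
by rewrite /L2 /L2_list /= det3_vec3; field: s2. Qed.

Lemma Ln_2_6_0 : det3 (L2 R (ii 2)) (L2 R (ii 6)) (L2 R (ii 0)) != 0.
Proof. apply: (nzpos (a := (-1)) (b := (1))); last by case/andP: sb => ? ?; lra.
by rewrite /L2 /L2_list /= det3_vec3; field: s2. Qed.

Lemma Ln_2_7_0 : det3 (L2 R (ii 2)) (L2 R (ii 7)) (L2 R (ii 0)) != 0.
Proof. apply: (nzpos (a := (2)) (b := (-1))); last by case/andP: sb => ? ?; lra.
by rewrite /L2 /L2_list /= det3_vec3; field: s2. Qed.

Lemma Ln_2_8_0 : det3 (L2 R (ii 2)) (L2 R (ii 8)) (L2 R (ii 0)) != 0.
Proof. apply: (nzpos (a := (-1)) (b := (1))); last by case/andP: sb => ? ?; lra.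
by rewrite /L2 /L2_list /= det3_vec3; field: s2. Qed.

Lemma Ln_2_9_0 : det3 (L2 R (ii 2)) (L2 R (ii 9)) (L2 R (ii 0)) != 0.
Proof. apply: (nzpos (a := (0)) (b := (1))); last by case/andP: sb => ? ?; lra.
by rewrite /L2 /L2_list /= det3_vec3; field: s2. Qed.

Lemma Ln_2_10_0 : det3 (L2 R (ii 2)) (L2 R (ii 10)) (L2 R (ii 0)) != 0.
Proof. apply: (nzpos (a := (0)) (b := (1))); last by case/andP: sb => ? ?; lra.
by rewrite /L2 /L2_list /= det3_vec3; field: s2. Qed.

Lemma Ln_2_11_0 : det3 (L2 R (ii 2)) (L2 R (ii 11)) (L2 R (ii 0)) != 0.
Proof. apply: (nzpos (a := (-2)) (b := (2))); last by case/andP: sb => ? ?; lra.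
by rewrite /L2 /L2_list /= det3_vec3; field: s2. Qed.

Lemma Ln_3_0_1 : det3 (L2 R (ii 3)) (L2 R (ii 0)) (L2 R (ii 1)) != 0.
Proof. apply: (nzneg (a := (-1)) (b := (0))); last by case/andP: sb => ? ?; lra.
by rewrite /L2 /L2_list /= det3_vec3; field: s2. Qed.

Lemma Ln_3_4_0 : det3 (L2 R (ii 3)) (L2 R (ii 4)) (L2 R (ii 0)) != 0.
Proof. apply: (nzneg (a := (-1)) (b := (0))); last by case/andP: sb => ? ?; lra.
by rewrite /L2 /L2_list /= det3_vec3; field: s2. Qed.

Lemma Ln_3_5_1 : det3 (L2 R (ii 3)) (L2 R (ii 5)) (L2 R (ii 1)) != 0.
Proof. apply: (nzpos (a := (1)) (b := (0))); last by case/andP: sb => ? ?; lra.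
by rewrite /L2 /L2_list /= det3_vec3; field: s2. Qed.

Lemma Ln_3_6_0 : det3 (L2 R (ii 3)) (L2 R (ii 6)) (L2 R (ii 0)) != 0.
Proof. apply: (nzneg (a := (1)) (b := (-1))); last by case/andP: sb => ? ?; lra.
by rewrite /L2 /L2_list /= det3_vec3; field: s2. Qed.

Lemma Ln_3_7_0 : det3 (L2 R (ii 3)) (L2 R (ii 7)) (L2 R (ii 0)) != 0.
Proof. apply: (nzpos (a := (-1)) (b := (1))); last by case/andP: sb => ? ?; lra.
by rewrite /L2 /L2_list /= det3_vec3; field: s2. Qed.

Lemma Ln_3_8_0 : det3 (L2 R (ii 3)) (L2 R (ii 8)) (L2 R (ii 0)) != 0.
Proof. apply: (nzpos (a := (1)) (b := (0))); last by case/andP: sb => ? ?; lra.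
by rewrite /L2 /L2_list /= det3_vec3; field: s2. Qed.

Lemma Ln_3_9_0 : det3 (L2 R (ii 3)) (L2 R (ii 9)) (L2 R (ii 0)) != 0.
Proof. apply: (nzneg (a := (0)) (b := (-(1/2)))); last by case/andP: sb => ? ?; lra.
by rewrite /L2 /L2_list /= det3_vec3; field: s2. Qed.

Lemma Ln_3_10_0 : det3 (L2 R (ii 3)) (L2 R (ii 10)) (L2 R (ii 0)) != 0.
Proof. apply: (nzpos (a := (1)) (b := (0))); last by case/andP: sb => ? ?; lra.
by rewrite /L2 /L2_list /= det3_vec3; field: s2. Qed.

Lemma Ln_3_11_0 : det3 (L2 R (ii 3)) (L2 R (ii 11)) (L2 R (ii 0)) != 0.
Proof. apply: (nzneg (a := (1)) (b := (-1))); last by case/andP: sb => ? ?; lra.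
by rewrite /L2 /L2_list /= det3_vec3; field: s2. Qed.

Lemma Ln_4_5_0 : det3 (L2 R (ii 4)) (L2 R (ii 5)) (L2 R (ii 0)) != 0.
Proof. apply: (nzpos (a := (1)) (b := (0))); last by case/andP: sb => ? ?; lra.
by rewrite /L2 /L2_list /= det3_vec3; field: s2. Qed.

Lemma Ln_4_6_1 : det3 (L2 R (ii 4)) (L2 R (ii 6)) (L2 R (ii 1)) != 0.
Proof. apply: (nzneg (a := (-2)) (b := (1))); last by case/andP: sb => ? ?; lra.
by rewrite /L2 /L2_list /= det3_vec3; field: s2. Qed.

Lemma Ln_4_7_0 : det3 (L2 R (ii 4)) (L2 R (ii 7)) (L2 R (ii 0)) != 0.
Proof. apply: (nzpos (a := (1)) (b := (0))); last by case/andP: sb => ? ?; lra.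
by rewrite /L2 /L2_list /= det3_vec3; field: s2. Qed.

Lemma Ln_4_8_0 : det3 (L2 R (ii 4)) (L2 R (ii 8)) (L2 R (ii 0)) != 0.
Proof. apply: (nzpos (a := (0)) (b := (1))); last by case/andP: sb => ? ?; lra.
by rewrite /L2 /L2_list /= det3_vec3; field: s2. Qed.

Lemma Ln_4_9_0 : det3 (L2 R (ii 4)) (L2 R (ii 9)) (L2 R (ii 0)) != 0.
Proof. apply: (nzpos (a := (0)) (b := (1/2))); last by case/andP: sb => ? ?; lra.
by rewrite /L2 /L2_list /= det3_vec3; field: s2. Qed.

Lemma Ln_4_10_0 : det3 (L2 R (ii 4)) (L2 R (ii 10)) (L2 R (ii 0)) != 0.
Proof. apply: (nzpos (a := (1)) (b := (1))); last by case/andP: sb => ? ?; lra.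
by rewrite /L2 /L2_list /= det3_vec3; field: s2. Qed.

Lemma Ln_4_11_0 : det3 (L2 R (ii 4)) (L2 R (ii 11)) (L2 R (ii 0)) != 0.
Proof. apply: (nzpos (a := (-1)) (b := (1))); last by case/andP: sb => ? ?; lra.
by rewrite /L2 /L2_list /= det3_vec3; field: s2. Qed.

Lemma Ln_5_1_4 : det3 (L2 R (ii 5)) (L2 R (ii 1)) (L2 R (ii 4)) != 0.
Proof. apply: (nzpos (a := (1)) (b := (0))); last by case/andP: sb => ? ?; lra.
by rewrite /L2 /L2_list /= det3_vec3; field: s2. Qed.

Lemma Ln_5_6_0 : det3 (L2 R (ii 5)) (L2 R (ii 6)) (L2 R (ii 0)) != 0.
Proof. apply: (nzneg (a := (1)) (b := (-1))); last by case/andP: sb => ? ?; lra.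
by rewrite /L2 /L2_list /= det3_vec3; field: s2. Qed.

Lemma Ln_5_7_0 : det3 (L2 R (ii 5)) (L2 R (ii 7)) (L2 R (ii 0)) != 0.
Proof. apply: (nzpos (a := (-1)) (b := (1))); last by case/andP: sb => ? ?; lra.
by rewrite /L2 /L2_list /= det3_vec3; field: s2. Qed.

Lemma Ln_5_8_0 : det3 (L2 R (ii 5)) (L2 R (ii 8)) (L2 R (ii 0)) != 0.
Proof. apply: (nzpos (a := (1)) (b := (0))); last by case/andP: sb => ? ?; lra.
by rewrite /L2 /L2_list /= det3_vec3; field: s2. Qed.

Lemma Ln_5_9_0 : det3 (L2 R (ii 5)) (L2 R (ii 9)) (L2 R (ii 0)) != 0.
Proof. apply: (nzneg (a := (0)) (b := (-(1/2)))); last by case/andP: sb => ? ?; lra.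
by rewrite /L2 /L2_list /= det3_vec3; field: s2. Qed.

Lemma Ln_5_10_0 : det3 (L2 R (ii 5)) (L2 R (ii 10)) (L2 R (ii 0)) != 0.
Proof. apply: (nzpos (a := (1)) (b := (0))); last by case/andP: sb => ? ?; lra.
by rewrite /L2 /L2_list /= det3_vec3; field: s2. Qed.

Lemma Ln_5_11_0 : det3 (L2 R (ii 5)) (L2 R (ii 11)) (L2 R (ii 0)) != 0.
Proof. apply: (nzneg (a := (1)) (b := (-1))); last by case/andP: sb => ? ?; lra.
by rewrite /L2 /L2_list /= det3_vec3; field: s2. Qed.

Lemma Ln_6_0_1 : det3 (L2 R (ii 6)) (L2 R (ii 0)) (L2 R (ii 1)) != 0.
Proof. apply: (nzneg (a := (1)) (b := (-1))); last by case/andP: sb => ? ?; lra.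
by rewrite /L2 /L2_list /= det3_vec3; field: s2. Qed.

Lemma Ln_6_7_0 : det3 (L2 R (ii 6)) (L2 R (ii 7)) (L2 R (ii 0)) != 0.
Proof. apply: (nzpos (a := (-1)) (b := (1))); last by case/andP: sb => ? ?; lra.
by rewrite /L2 /L2_list /= det3_vec3; field: s2. Qed.

Lemma Ln_6_8_0 : det3 (L2 R (ii 6)) (L2 R (ii 8)) (L2 R (ii 0)) != 0.
Proof. apply: (nzpos (a := (2)) (b := (-1))); last by case/andP: sb => ? ?; lra.
by rewrite /L2 /L2_list /= det3_vec3; field: s2. Qed.

Lemma Ln_6_9_0 : det3 (L2 R (ii 6)) (L2 R (ii 9)) (L2 R (ii 0)) != 0.
Proof. apply: (nzpos (a := (1)) (b := (-(1/2)))); last by case/andP: sb => ? ?; lra.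
by rewrite /L2 /L2_list /= det3_vec3; field: s2. Qed.

Lemma Ln_6_10_0 : det3 (L2 R (ii 6)) (L2 R (ii 10)) (L2 R (ii 0)) != 0.
Proof. apply: (nzpos (a := (1)) (b := (0))); last by case/andP: sb => ? ?; lra.
by rewrite /L2 /L2_list /= det3_vec3; field: s2. Qed.

Lemma Ln_6_11_0 : det3 (L2 R (ii 6)) (L2 R (ii 11)) (L2 R (ii 0)) != 0.
Proof. apply: (nzpos (a := (3)) (b := (-2))); last by case/andP: sb => ? ?; lra.
by rewrite /L2 /L2_list /= det3_vec3; field: s2. Qed.

Lemma Ln_7_8_0 : det3 (L2 R (ii 7)) (L2 R (ii 8)) (L2 R (ii 0)) != 0.
Proof. apply: (nzpos (a := (-1)) (b := (1))); last by case/andP: sb => ? ?; lra.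
by rewrite /L2 /L2_list /= det3_vec3; field: s2. Qed.

Lemma Ln_7_9_0 : det3 (L2 R (ii 7)) (L2 R (ii 9)) (L2 R (ii 0)) != 0.
Proof. apply: (nzneg (a := (-1)) (b := (0))); last by case/andP: sb => ? ?; lra.
by rewrite /L2 /L2_list /= det3_vec3; field: s2. Qed.

Lemma Ln_7_10_1 : det3 (L2 R (ii 7)) (L2 R (ii 10)) (L2 R (ii 1)) != 0.
Proof. apply: (nzneg (a := (-2)) (b := (1))); last by case/andP: sb => ? ?; lra.
by rewrite /L2 /L2_list /= det3_vec3; field: s2. Qed.

Lemma Ln_7_11_0 : det3 (L2 R (ii 7)) (L2 R (ii 11)) (L2 R (ii 0)) != 0.
Proof. apply: (nzneg (a := (-2)) (b := (1))); last by case/andP: sb => ? ?; lra.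
by rewrite /L2 /L2_list /= det3_vec3; field: s2. Qed.

Lemma Ln_8_0_1 : det3 (L2 R (ii 8)) (L2 R (ii 0)) (L2 R (ii 1)) != 0.
Proof. apply: (nzneg (a := (1)) (b := (-1))); last by case/andP: sb => ? ?; lra.
by rewrite /L2 /L2_list /= det3_vec3; field: s2. Qed.

Lemma Ln_8_9_0 : det3 (L2 R (ii 8)) (L2 R (ii 9)) (L2 R (ii 0)) != 0.
Proof. apply: (nzneg (a := (-1)) (b := (-(1/2)))); last by case/andP: sb => ? ?; lra.
by rewrite /L2 /L2_list /= det3_vec3; field: s2. Qed.

Lemma Ln_8_10_0 : det3 (L2 R (ii 8)) (L2 R (ii 10)) (L2 R (ii 0)) != 0.
Proof. apply: (nzneg (a := (-1)) (b := (0))); last by case/andP: sb => ? ?; lra.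
by rewrite /L2 /L2_list /= det3_vec3; field: s2. Qed.

Lemma Ln_8_11_0 : det3 (L2 R (ii 8)) (L2 R (ii 11)) (L2 R (ii 0)) != 0.
Proof. apply: (nzneg (a := (-1)) (b := (0))); last by case/andP: sb => ? ?; lra.
by rewrite /L2 /L2_list /= det3_vec3; field: s2. Qed.

Lemma Ln_9_0_1 : det3 (L2 R (ii 9)) (L2 R (ii 0)) (L2 R (ii 1)) != 0.
Proof. apply: (nzneg (a := (0)) (b := (-1))); last by case/andP: sb => ? ?; lra.
by rewrite /L2 /L2_list /= det3_vec3; field: s2. Qed.

Lemma Ln_9_10_0 : det3 (L2 R (ii 9)) (L2 R (ii 10)) (L2 R (ii 0)) != 0.
Proof. apply: (nzpos (a := (1)) (b := (1))); last by case/andP: sb => ? ?; lra.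
by rewrite /L2 /L2_list /= det3_vec3; field: s2. Qed.

Lemma Ln_9_11_1 : det3 (L2 R (ii 9)) (L2 R (ii 11)) (L2 R (ii 1)) != 0.
Proof. apply: (nzneg (a := (-2)) (b := (1))); last by case/andP: sb => ? ?; lra.
by rewrite /L2 /L2_list /= det3_vec3; field: s2. Qed.

Lemma Ln_10_0_1 : det3 (L2 R (ii 10)) (L2 R (ii 0)) (L2 R (ii 1)) != 0.
Proof. apply: (nzneg (a := (0)) (b := (-1))); last by case/andP: sb => ? ?; lra.
by rewrite /L2 /L2_list /= det3_vec3; field: s2. Qed.

Lemma Ln_10_11_0 : det3 (L2 R (ii 10)) (L2 R (ii 11)) (L2 R (ii 0)) != 0.
Proof. apply: (nzneg (a := (0)) (b := (-1))); last by case/andP: sb => ? ?; lra.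
by rewrite /L2 /L2_list /= det3_vec3; field: s2. Qed.

Lemma Ln_11_0_1 : det3 (L2 R (ii 11)) (L2 R (ii 0)) (L2 R (ii 1)) != 0.
Proof. apply: (nzneg (a := (2)) (b := (-2))); last by case/andP: sb => ? ?; lra.
by rewrite /L2 /L2_list /= det3_vec3; field: s2. Qed.

Lemma L2arr : is_arrangement (L2 R).
Proof.
move=> i j; move: i j; apply: all12; apply: all12.
  by [].
  by move=> _; apply: (@rank2 _ _ _ (L2 R (ii 3))); exact: Ln_0_1_3.
  by move=> _; apply: (@rank2 _ _ _ (L2 R (ii 3))); exact: Ln_0_2_3.
  by move=> _; apply: (@rank2 _ _ _ (L2 R (ii 1))); exact: Ln_0_3_1.
  by move=> _; apply: (@rank2 _ _ _ (L2 R (ii 1))); exact: Ln_0_4_1.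
  by move=> _; apply: (@rank2 _ _ _ (L2 R (ii 1))); exact: Ln_0_5_1.
  by move=> _; apply: (@rank2 _ _ _ (L2 R (ii 1))); exact: Ln_0_6_1.
  by move=> _; apply: (@rank2 _ _ _ (L2 R (ii 1))); exact: Ln_0_7_1.
  by move=> _; apply: (@rank2 _ _ _ (L2 R (ii 1))); exact: Ln_0_8_1.
  by move=> _; apply: (@rank2 _ _ _ (L2 R (ii 1))); exact: Ln_0_9_1.
  by move=> _; apply: (@rank2 _ _ _ (L2 R (ii 1))); exact: Ln_0_10_1.
  by move=> _; apply: (@rank2 _ _ _ (L2 R (ii 1))); exact: Ln_0_11_1.
  by move=> _; apply: (@rank2 _ _ _ (L2 R (ii 3))); rewrite det3_swap12 oppr_eq0; exact: Ln_0_1_3.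
  by [].
  by move=> _; apply: (@rank2 _ _ _ (L2 R (ii 3))); exact: Ln_1_2_3.
  by move=> _; apply: (@rank2 _ _ _ (L2 R (ii 0))); exact: Ln_1_3_0.
  by move=> _; apply: (@rank2 _ _ _ (L2 R (ii 0))); exact: Ln_1_4_0.
  by move=> _; apply: (@rank2 _ _ _ (L2 R (ii 0))); exact: Ln_1_5_0.
  by move=> _; apply: (@rank2 _ _ _ (L2 R (ii 0))); exact: Ln_1_6_0.
  by move=> _; apply: (@rank2 _ _ _ (L2 R (ii 0))); exact: Ln_1_7_0.
  by move=> _; apply: (@rank2 _ _ _ (L2 R (ii 0))); exact: Ln_1_8_0.
  by move=> _; apply: (@rank2 _ _ _ (L2 R (ii 0))); exact: Ln_1_9_0.
  by move=> _; apply: (@rank2 _ _ _ (L2 R (ii 0))); exact: Ln_1_10_0.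
  by move=> _; apply: (@rank2 _ _ _ (L2 R (ii 0))); exact: Ln_1_11_0.
  by move=> _; apply: (@rank2 _ _ _ (L2 R (ii 3))); rewrite det3_swap12 oppr_eq0; exact: Ln_0_2_3.
  by move=> _; apply: (@rank2 _ _ _ (L2 R (ii 3))); rewrite det3_swap12 oppr_eq0; exact: Ln_1_2_3.
  by [].
  by move=> _; apply: (@rank2 _ _ _ (L2 R (ii 0))); exact: Ln_2_3_0.
  by move=> _; apply: (@rank2 _ _ _ (L2 R (ii 0))); exact: Ln_2_4_0.
  by move=> _; apply: (@rank2 _ _ _ (L2 R (ii 0))); exact: Ln_2_5_0.
  by move=> _; apply: (@rank2 _ _ _ (L2 R (ii 0))); exact: Ln_2_6_0.
  by move=> _; apply: (@rank2 _ _ _ (L2 R (ii 0))); exact: Ln_2_7_0.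
  by move=> _; apply: (@rank2 _ _ _ (L2 R (ii 0))); exact: Ln_2_8_0.
  by move=> _; apply: (@rank2 _ _ _ (L2 R (ii 0))); exact: Ln_2_9_0.
  by move=> _; apply: (@rank2 _ _ _ (L2 R (ii 0))); exact: Ln_2_10_0.
  by move=> _; apply: (@rank2 _ _ _ (L2 R (ii 0))); exact: Ln_2_11_0.
  by move=> _; apply: (@rank2 _ _ _ (L2 R (ii 1))); rewrite det3_swap12 oppr_eq0; exact: Ln_0_3_1.
  by move=> _; apply: (@rank2 _ _ _ (L2 R (ii 0))); rewrite det3_swap12 oppr_eq0; exact: Ln_1_3_0.
  by move=> _; apply: (@rank2 _ _ _ (L2 R (ii 0))); rewrite det3_swap12 oppr_eq0; exact: Ln_2_3_0.
  by [].
  by move=> _; apply: (@rank2 _ _ _ (L2 R (ii 0))); exact: Ln_3_4_0.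
  by move=> _; apply: (@rank2 _ _ _ (L2 R (ii 1))); exact: Ln_3_5_1.
  by move=> _; apply: (@rank2 _ _ _ (L2 R (ii 0))); exact: Ln_3_6_0.
  by move=> _; apply: (@rank2 _ _ _ (L2 R (ii 0))); exact: Ln_3_7_0.
  by move=> _; apply: (@rank2 _ _ _ (L2 R (ii 0))); exact: Ln_3_8_0.
  by move=> _; apply: (@rank2 _ _ _ (L2 R (ii 0))); exact: Ln_3_9_0.
  by move=> _; apply: (@rank2 _ _ _ (L2 R (ii 0))); exact: Ln_3_10_0.
  by move=> _; apply: (@rank2 _ _ _ (L2 R (ii 0))); exact: Ln_3_11_0.
  by move=> _; apply: (@rank2 _ _ _ (L2 R (ii 1))); rewrite det3_swap12 oppr_eq0; exact: Ln_0_4_1.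
  by move=> _; apply: (@rank2 _ _ _ (L2 R (ii 0))); rewrite det3_swap12 oppr_eq0; exact: Ln_1_4_0.
  by move=> _; apply: (@rank2 _ _ _ (L2 R (ii 0))); rewrite det3_swap12 oppr_eq0; exact: Ln_2_4_0.
  by move=> _; apply: (@rank2 _ _ _ (L2 R (ii 0))); rewrite det3_swap12 oppr_eq0; exact: Ln_3_4_0.
  by [].
  by move=> _; apply: (@rank2 _ _ _ (L2 R (ii 0))); exact: Ln_4_5_0.
  by move=> _; apply: (@rank2 _ _ _ (L2 R (ii 1))); exact: Ln_4_6_1.
  by move=> _; apply: (@rank2 _ _ _ (L2 R (ii 0))); exact: Ln_4_7_0.
  by move=> _; apply: (@rank2 _ _ _ (L2 R (ii 0))); exact: Ln_4_8_0.
  by move=> _; apply: (@rank2 _ _ _ (L2 R (ii 0))); exact: Ln_4_9_0.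
  by move=> _; apply: (@rank2 _ _ _ (L2 R (ii 0))); exact: Ln_4_10_0.
  by move=> _; apply: (@rank2 _ _ _ (L2 R (ii 0))); exact: Ln_4_11_0.
  by move=> _; apply: (@rank2 _ _ _ (L2 R (ii 1))); rewrite det3_swap12 oppr_eq0; exact: Ln_0_5_1.
  by move=> _; apply: (@rank2 _ _ _ (L2 R (ii 0))); rewrite det3_swap12 oppr_eq0; exact: Ln_1_5_0.
  by move=> _; apply: (@rank2 _ _ _ (L2 R (ii 0))); rewrite det3_swap12 oppr_eq0; exact: Ln_2_5_0.
  by move=> _; apply: (@rank2 _ _ _ (L2 R (ii 1))); rewrite det3_swap12 oppr_eq0; exact: Ln_3_5_1.
  by move=> _; apply: (@rank2 _ _ _ (L2 R (ii 0))); rewrite det3_swap12 oppr_eq0; exact: Ln_4_5_0.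
  by [].
  by move=> _; apply: (@rank2 _ _ _ (L2 R (ii 0))); exact: Ln_5_6_0.
  by move=> _; apply: (@rank2 _ _ _ (L2 R (ii 0))); exact: Ln_5_7_0.
  by move=> _; apply: (@rank2 _ _ _ (L2 R (ii 0))); exact: Ln_5_8_0.
  by move=> _; apply: (@rank2 _ _ _ (L2 R (ii 0))); exact: Ln_5_9_0.
  by move=> _; apply: (@rank2 _ _ _ (L2 R (ii 0))); exact: Ln_5_10_0.
  by move=> _; apply: (@rank2 _ _ _ (L2 R (ii 0))); exact: Ln_5_11_0.
  by move=> _; apply: (@rank2 _ _ _ (L2 R (ii 1))); rewrite det3_swap12 oppr_eq0; exact: Ln_0_6_1.
  by move=> _; apply: (@rank2 _ _ _ (L2 R (ii 0))); rewrite det3_swap12 oppr_eq0; exact: Ln_1_6_0.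
  by move=> _; apply: (@rank2 _ _ _ (L2 R (ii 0))); rewrite det3_swap12 oppr_eq0; exact: Ln_2_6_0.
  by move=> _; apply: (@rank2 _ _ _ (L2 R (ii 0))); rewrite det3_swap12 oppr_eq0; exact: Ln_3_6_0.
  by move=> _; apply: (@rank2 _ _ _ (L2 R (ii 1))); rewrite det3_swap12 oppr_eq0; exact: Ln_4_6_1.
  by move=> _; apply: (@rank2 _ _ _ (L2 R (ii 0))); rewrite det3_swap12 oppr_eq0; exact: Ln_5_6_0.
  by [].
  by move=> _; apply: (@rank2 _ _ _ (L2 R (ii 0))); exact: Ln_6_7_0.
  by move=> _; apply: (@rank2 _ _ _ (L2 R (ii 0))); exact: Ln_6_8_0.
  by move=> _; apply: (@rank2 _ _ _ (L2 R (ii 0))); exact: Ln_6_9_0.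
  by move=> _; apply: (@rank2 _ _ _ (L2 R (ii 0))); exact: Ln_6_10_0.
  by move=> _; apply: (@rank2 _ _ _ (L2 R (ii 0))); exact: Ln_6_11_0.
  by move=> _; apply: (@rank2 _ _ _ (L2 R (ii 1))); rewrite det3_swap12 oppr_eq0; exact: Ln_0_7_1.
  by move=> _; apply: (@rank2 _ _ _ (L2 R (ii 0))); rewrite det3_swap12 oppr_eq0; exact: Ln_1_7_0.
  by move=> _; apply: (@rank2 _ _ _ (L2 R (ii 0))); rewrite det3_swap12 oppr_eq0; exact: Ln_2_7_0.
  by move=> _; apply: (@rank2 _ _ _ (L2 R (ii 0))); rewrite det3_swap12 oppr_eq0; exact: Ln_3_7_0.
  by move=> _; apply: (@rank2 _ _ _ (L2 R (ii 0))); rewrite det3_swap12 oppr_eq0; exact: Ln_4_7_0.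
  by move=> _; apply: (@rank2 _ _ _ (L2 R (ii 0))); rewrite det3_swap12 oppr_eq0; exact: Ln_5_7_0.
  by move=> _; apply: (@rank2 _ _ _ (L2 R (ii 0))); rewrite det3_swap12 oppr_eq0; exact: Ln_6_7_0.
  by [].
  by move=> _; apply: (@rank2 _ _ _ (L2 R (ii 0))); exact: Ln_7_8_0.
  by move=> _; apply: (@rank2 _ _ _ (L2 R (ii 0))); exact: Ln_7_9_0.
  by move=> _; apply: (@rank2 _ _ _ (L2 R (ii 1))); exact: Ln_7_10_1.
  by move=> _; apply: (@rank2 _ _ _ (L2 R (ii 0))); exact: Ln_7_11_0.
  by move=> _; apply: (@rank2 _ _ _ (L2 R (ii 1))); rewrite det3_swap12 oppr_eq0; exact: Ln_0_8_1.
  by move=> _; apply: (@rank2 _ _ _ (L2 R (ii 0))); rewrite det3_swap12 oppr_eq0; exact: Ln_1_8_0.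
  by move=> _; apply: (@rank2 _ _ _ (L2 R (ii 0))); rewrite det3_swap12 oppr_eq0; exact: Ln_2_8_0.
  by move=> _; apply: (@rank2 _ _ _ (L2 R (ii 0))); rewrite det3_swap12 oppr_eq0; exact: Ln_3_8_0.
  by move=> _; apply: (@rank2 _ _ _ (L2 R (ii 0))); rewrite det3_swap12 oppr_eq0; exact: Ln_4_8_0.
  by move=> _; apply: (@rank2 _ _ _ (L2 R (ii 0))); rewrite det3_swap12 oppr_eq0; exact: Ln_5_8_0.
  by move=> _; apply: (@rank2 _ _ _ (L2 R (ii 0))); rewrite det3_swap12 oppr_eq0; exact: Ln_6_8_0.
  by move=> _; apply: (@rank2 _ _ _ (L2 R (ii 0))); rewrite det3_swap12 oppr_eq0; exact: Ln_7_8_0.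
  by [].
  by move=> _; apply: (@rank2 _ _ _ (L2 R (ii 0))); exact: Ln_8_9_0.
  by move=> _; apply: (@rank2 _ _ _ (L2 R (ii 0))); exact: Ln_8_10_0.
  by move=> _; apply: (@rank2 _ _ _ (L2 R (ii 0))); exact: Ln_8_11_0.
  by move=> _; apply: (@rank2 _ _ _ (L2 R (ii 1))); rewrite det3_swap12 oppr_eq0; exact: Ln_0_9_1.
  by move=> _; apply: (@rank2 _ _ _ (L2 R (ii 0))); rewrite det3_swap12 oppr_eq0; exact: Ln_1_9_0.
  by move=> _; apply: (@rank2 _ _ _ (L2 R (ii 0))); rewrite det3_swap12 oppr_eq0; exact: Ln_2_9_0.
  by move=> _; apply: (@rank2 _ _ _ (L2 R (ii 0))); rewrite det3_swap12 oppr_eq0; exact: Ln_3_9_0.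
  by move=> _; apply: (@rank2 _ _ _ (L2 R (ii 0))); rewrite det3_swap12 oppr_eq0; exact: Ln_4_9_0.
  by move=> _; apply: (@rank2 _ _ _ (L2 R (ii 0))); rewrite det3_swap12 oppr_eq0; exact: Ln_5_9_0.
  by move=> _; apply: (@rank2 _ _ _ (L2 R (ii 0))); rewrite det3_swap12 oppr_eq0; exact: Ln_6_9_0.
  by move=> _; apply: (@rank2 _ _ _ (L2 R (ii 0))); rewrite det3_swap12 oppr_eq0; exact: Ln_7_9_0.
  by move=> _; apply: (@rank2 _ _ _ (L2 R (ii 0))); rewrite det3_swap12 oppr_eq0; exact: Ln_8_9_0.
  by [].
  by move=> _; apply: (@rank2 _ _ _ (L2 R (ii 0))); exact: Ln_9_10_0.
  by move=> _; apply: (@rank2 _ _ _ (L2 R (ii 1))); exact: Ln_9_11_1.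
  by move=> _; apply: (@rank2 _ _ _ (L2 R (ii 1))); rewrite det3_swap12 oppr_eq0; exact: Ln_0_10_1.
  by move=> _; apply: (@rank2 _ _ _ (L2 R (ii 0))); rewrite det3_swap12 oppr_eq0; exact: Ln_1_10_0.
  by move=> _; apply: (@rank2 _ _ _ (L2 R (ii 0))); rewrite det3_swap12 oppr_eq0; exact: Ln_2_10_0.
  by move=> _; apply: (@rank2 _ _ _ (L2 R (ii 0))); rewrite det3_swap12 oppr_eq0; exact: Ln_3_10_0.
  by move=> _; apply: (@rank2 _ _ _ (L2 R (ii 0))); rewrite det3_swap12 oppr_eq0; exact: Ln_4_10_0.
  by move=> _; apply: (@rank2 _ _ _ (L2 R (ii 0))); rewrite det3_swap12 oppr_eq0; exact: Ln_5_10_0.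
  by move=> _; apply: (@rank2 _ _ _ (L2 R (ii 0))); rewrite det3_swap12 oppr_eq0; exact: Ln_6_10_0.
  by move=> _; apply: (@rank2 _ _ _ (L2 R (ii 1))); rewrite det3_swap12 oppr_eq0; exact: Ln_7_10_1.
  by move=> _; apply: (@rank2 _ _ _ (L2 R (ii 0))); rewrite det3_swap12 oppr_eq0; exact: Ln_8_10_0.
  by move=> _; apply: (@rank2 _ _ _ (L2 R (ii 0))); rewrite det3_swap12 oppr_eq0; exact: Ln_9_10_0.
  by [].
  by move=> _; apply: (@rank2 _ _ _ (L2 R (ii 0))); exact: Ln_10_11_0.
  by move=> _; apply: (@rank2 _ _ _ (L2 R (ii 1))); rewrite det3_swap12 oppr_eq0; exact: Ln_0_11_1.
  by move=> _; apply: (@rank2 _ _ _ (L2 R (ii 0))); rewrite det3_swap12 oppr_eq0; exact: Ln_1_11_0.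
  by move=> _; apply: (@rank2 _ _ _ (L2 R (ii 0))); rewrite det3_swap12 oppr_eq0; exact: Ln_2_11_0.
  by move=> _; apply: (@rank2 _ _ _ (L2 R (ii 0))); rewrite det3_swap12 oppr_eq0; exact: Ln_3_11_0.
  by move=> _; apply: (@rank2 _ _ _ (L2 R (ii 0))); rewrite det3_swap12 oppr_eq0; exact: Ln_4_11_0.
  by move=> _; apply: (@rank2 _ _ _ (L2 R (ii 0))); rewrite det3_swap12 oppr_eq0; exact: Ln_5_11_0.
  by move=> _; apply: (@rank2 _ _ _ (L2 R (ii 0))); rewrite det3_swap12 oppr_eq0; exact: Ln_6_11_0.
  by move=> _; apply: (@rank2 _ _ _ (L2 R (ii 0))); rewrite det3_swap12 oppr_eq0; exact: Ln_7_11_0.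
  by move=> _; apply: (@rank2 _ _ _ (L2 R (ii 0))); rewrite det3_swap12 oppr_eq0; exact: Ln_8_11_0.
  by move=> _; apply: (@rank2 _ _ _ (L2 R (ii 1))); rewrite det3_swap12 oppr_eq0; exact: Ln_9_11_1.
  by move=> _; apply: (@rank2 _ _ _ (L2 R (ii 0))); rewrite det3_swap12 oppr_eq0; exact: Ln_10_11_0.
  by [].
Qed.

Lemma tr_z (g : 'I_12 -> 'rV[R]_3) i j k : realizes (matroid_bases (L2 R)) g ->
  i != j -> j != k -> i != k ->
  det3 (L2 R i) (L2 R j) (L2 R k) = 0 -> det3 (g i) (g j) (g k) = 0.
Proof.
case=> _ EM ij jk ik H; apply/eqP; rewrite -[_ == 0]negbK -bases_nz // EM.
by rewrite bases_nz // H eqxx.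
Qed.

Lemma tr_nz (g : 'I_12 -> 'rV[R]_3) i j k : realizes (matroid_bases (L2 R)) g ->
  i != j -> j != k -> i != k ->
  det3 (L2 R i) (L2 R j) (L2 R k) != 0 -> det3 (g i) (g j) (g k) != 0.
Proof. by case=> _ EM ij jk ik H; rewrite -bases_nz // EM bases_nz. Qed.

End Real.

Theorem proposition4p5 (R : realType) :
  @realization_space_zero_dim R 12 (matroid_bases (L2 R)).
Proof.
set M := matroid_bases (L2 R).
have L2r : realizes M (L2 R) by split; [exact: L2arr |].
pose T (b : 'I_2) : R := if val b == 0%N then 1 + Num.sqrt 2 / 2 else 1 - Num.sqrt 2 / 2.
pose Q b g := realizes M g /\ pgl_equiv g (fun i => nth 0 (Nt (T b)) i).
pose F b := epsilon (inhabits (L2 R))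
  (fun g => realizes M g /\ ((exists g', Q b g') -> Q b g)).
have FP : forall b, realizes M (F b) /\ ((exists g', Q b g') -> Q b (F b)).
  move=> b; have := @epsilon_spec _ (inhabits (L2 R)) (fun g => realizes M g /\ ((exists g', Q b g') -> Q b g)).
  move=> H; apply: H.
  case: (classic (exists g', Q b g')) => [[g' Hg]|nQ].
    by exists g'; split; [exact: Hg.1 | move=> _].
  by exists (L2 R); split => // H; case: nQ.
exists 2%N, F.
split; first by [].
split; first by move=> b; case: (FP b).
move=> g Hg.
have [A uA [t [teq Ht]]] : exists2 A : 'M[R]_3, A \in unitmx & exists t : R,
    2 * t^+2 - 4 * t + 1 = 0 /\
    forall i, exists2 l : R, l != 0 & g i *m A = l *: nth 0 (Nt t) i.
  apply: derive.
  by apply: (tr_nz Hg _ _ _ (Ln_0_1_4 R)).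
  by apply: (tr_nz Hg _ _ _ (Ln_5_1_4 R)).
  by apply: (tr_nz Hg _ _ _ (Ln_0_5_4 R)).
  by apply: (tr_nz Hg _ _ _ (Ln_0_1_5 R)).
  by apply: (tr_nz Hg _ _ _ (Ln_0_1_7 R)).
  by apply: (tr_nz Hg _ _ _ (Ln_0_4_7 R)).
  by apply: (tr_nz Hg _ _ _ (Ln_0_5_7 R)).
  by apply: (tr_nz Hg _ _ _ (Ln_3_0_1 R)).
  by apply: (tr_nz Hg _ _ _ (Ln_2_0_4 R)).
  by apply: (tr_nz Hg _ _ _ (Ln_6_0_1 R)).
  by apply: (tr_nz Hg _ _ _ (Ln_11_0_1 R)).
  by apply: (tr_nz Hg _ _ _ (Ln_10_0_1 R)).
  by apply: (tr_nz Hg _ _ _ (Ln_9_0_1 R)).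
  by apply: (tr_nz Hg _ _ _ (Ln_8_0_1 R)).
  by apply: (tr_z Hg _ _ _ (Lz_3_0_5 R)).
  by apply: (tr_z Hg _ _ _ (Lz_3_1_4 R)).
  by apply: (tr_z Hg _ _ _ (Lz_2_0_1 R)).
  by apply: (tr_z Hg _ _ _ (Lz_2_4_5 R)).
  by apply: (tr_z Hg _ _ _ (Lz_7_1_5 R)).
  by apply: (tr_z Hg _ _ _ (Lz_6_0_4 R)).
  by apply: (tr_z Hg _ _ _ (Lz_6_3_7 R)).
  by apply: (tr_z Hg _ _ _ (Lz_11_5_6 R)).
  by apply: (tr_z Hg _ _ _ (Lz_11_2_7 R)).
  by apply: (tr_z Hg _ _ _ (Lz_10_0_7 R)).
  by apply: (tr_z Hg _ _ _ (Lz_10_2_6 R)).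
  by apply: (tr_z Hg _ _ _ (Lz_9_0_11 R)).
  by apply: (tr_z Hg _ _ _ (Lz_9_1_10 R)).
  by apply: (tr_z Hg _ _ _ (Lz_8_1_6 R)).
  by apply: (tr_z Hg _ _ _ (Lz_8_5_10 R)).
  by apply: (tr_z Hg _ _ _ (Lz_9_4_7 R)).
have [l Hl1 Hl2] := fin_all_exists2 Ht.
have gN : pgl_equiv g (fun i => nth 0 (Nt t) i).
  exists A; split => //; exists (fun i => (l i)^-1); split => [i|i].
    by rewrite invr_neq0.
  by rewrite Hl2 scalerA mulVf // scale1r.
have [b Tb] : exists b, t = T b.
  pose y := 2 * (t - 1).
  have y2 : y ^+ 2 = 2 by rewrite /y; apply/eqP; rewrite -subr_eq0; apply/eqP;
    rewrite -[RHS](mulr0 2) -teq; ring.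
  have := sqrtr_sqr y; rewrite y2 => hy.
  have ty : t = 1 + y / 2 by rewrite /y; field.
  case: (ltrP y 0) => hy0.
    exists (@Ordinal 2 1 isT); rewrite /T /= ty.
    by rewrite ltr0_norm // in hy; rewrite hy; field.
  exists (@Ordinal 2 0 isT); rewrite /T /= ty.
  by rewrite ger0_norm // in hy; rewrite hy.
have Qg : Q b g by split => //; rewrite -Tb.
have [_ HF] := FP b.
have QF := HF (ex_intro _ g Qg).
exists b; exact: pgl_trans QF.2 (pgl_sym Qg.2).
Qed.
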